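(* The system MaxSAT resolution $+$ cost-SR is sound: if from a MaxSAT instance with satisfiable hard clauses $H_0=\{C_1\lor b_1,\dots,C_m\lor b_m\}$ and soft clauses $S_0=\{\lnot b_1,\dots,\lnot b_m\}$ there is a MaxSAT resolution $+$ cost-SR derivation $(H_0,S_0),\dots,(H_t,S_t)$ such that $S_t$ contains the empty clause $\bot$ with multiplicity $k$, then every assignment satisfying $H_0$ falsifies at least $k$ clauses of $S_0$; equivalently $\mathrm{cost}(H_0)\ge k$.
   Context: $b_1,\dots,b_m$ are distinct blocking variables not occurring in $C_1,\dots,C_m$; $\mathrm{cost}(\alpha)=\sum_i\alpha(b_i)$, $\mathrm{cost}(H)=\min\{\mathrm{cost}(\alpha):\alpha\text{ total},\alpha\models H\}$. Notation: substitutions map variables to $0,1$ or literals ($\sigma(\lnot x)=\lnot\sigma(x)$); $(\sigma\circ\tau)(x)=\sigma(\tau(x))$; $C{\upharpoonright}_\sigma$ and $\Gamma{\upharpoonright}_\sigma$ denote restriction (clauses set to $1$ removed); $\lnot C$ is the partial assignment falsifying all literals of $C$; $\Gamma\vdash_1 C$ means unit propagation on $\Gamma{\upharpoonright}_{\lnot C}$ derives $\bot$, and $\Gamma\vdash_1\Delta$ means this for all $D\in\Delta$. $C$ is cost-SR w.r.t. $\Gamma$ if some substitution $\sigma$ satisfies (1) $\Gamma{\upharpoonright}_{\lnot C}\vdash_1(\Gamma\cup\{C\}){\upharpoonright}_\sigma$ and (2) $\mathrm{cost}(\tau\circ\sigma)\le\mathrm{cost}(\tau)$ for all total $\tau\supseteq\lnot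 C$. A MaxSAT resolution $+$ cost-SR derivation is a sequence of pairs of multisets $(H_i,S_i)$ where each step is one of: (a) $S_i=S_{i-1}$, $H_i=H_{i-1}\cup\{C\}$ with $C$ obtained by resolution (or weakening) from $H_{i-1}$; (a') $S_i=S_{i-1}$, $H_i=H_{i-1}\cup\{C\}$ with $C$ cost-SR w.r.t. $H_{i-1}$; (b) $S_i=S_{i-1}\cup\{C\}$ for some $C\in H_{i-1}$, $H_i=H_{i-1}$; (c) $S_i=S_{i-1}\setminus\{C\}\cup\{C\lor x,C\lor\lnot x\}$ for $C\in S_{i-1}$, $H_i=H_{i-1}$; (d) $S_i=S_{i-1}\setminus\{C\lor x,C\lor\lnot x\}\cup\{C\}$ for $\{C\lor x,C\lor\lnot x\}\subseteq S_{i-1}$, $H_i=H_{i-1}$. *)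

(* Defs.v *)
From HB Require Import structures.
From mathcomp Require Import all_boot.
From mathcomp Require Import finmap.

Set Implicit Arguments.
Unset Strict Implicit.
Unset Printing Implicit Defensive.

Local Open Scope fset_scope.

(** Variables are natural numbers.  A literal is a pair (x, p): (x, true) is
    the positive literal x, (x, false) is the negative literal ~x. *)
Definition lit := (nat * bool)%type.
Definition lneg (l : lit) : lit := (l.1, ~~ l.2).

(** A clause is a finite set of literals; the empty clause is fset0 (= bot). *)
Definition clause := {fset lit}.

(** Multisets of clauses are represented by sequences (compared up to
    permutation with perm_eq). *)
Definition cmset := seq clause.

Definition assignment := nat -> bool.
Definition sat_lit (a : assignment) (l : lit) : bool := a l.1 == l.2.
Definition sat_clause (a : assignment) (C : clause) : bool :=
  has (sat_lit a) (enum_fset C).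
Definition sat_cnf (a : assignment) (G : cmset) : bool :=
  all (sat_clause a) G.

Inductive sval := SConst of bool | SLit of lit.
Definition substitution := nat -> sval.

Definition sval_neg (s : sval) : sval :=
  match s with SConst b => SConst (~~ b) | SLit l => SLit (lneg l) end.

Definition sub_lit (s : substitution) (l : lit) : sval :=
  if l.2 then s l.1 else sval_neg (s l.1).

Definition sval_is_true (v : sval) : bool :=
  if v is SConst true then true else false.
Definition sval_lit (v : sval) : option lit :=
  if v is SLit l then Some l else None.

(** Restriction C|sigma: None if some literal is set to 1 (the clause is
    removed); otherwise literals set to 0 are dropped and the others are
    replaced by their images. *)
Definition restrict_clause (s : substitution) (C : clause) : option clause :=
  if has (fun l => sval_is_true (sub_lit s l)) (enum_fset C) then None
  else Some [fset l' | l' in pmap (fun l => sval_lit (sub_lit s l)) (enum_fset C)].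

Definition restrict (s : substitution) (G : cmset) : cmset :=
  pmap (restrict_clause s) G.

Definition passignment := nat -> option bool.
Definition subst_of_pa (r : passignment) : substitution :=
  fun x => match r x with Some b => SConst b | None => SLit (x, true) end.

(** ~C : the partial assignment falsifying all literals of C (for a
    tautological C the positive occurrence takes priority; this convention is
    irrelevant). *)
Definition negc (C : clause) : passignment :=
  fun x => if (x, true) \in C then Some false
           else if (x, false) \in C then Some true else None.

Definition assign_lit (l : lit) : passignment :=
  fun x => if x == l.1 then Some l.2 else None.

Inductive up_refutes : cmset -> Prop :=
| up_bot F : fset0 \in F -> up_refutes F
| up_unit F (l : lit) : [fset l] \in F ->
    up_refutes (restrict (subst_of_pa (assign_lit l)) F) -> up_refutes F.

Definition up_derives (G : cmset) (D : clause) : Prop :=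
  up_refutes (restrict (subst_of_pa (negc D)) G).

Definition extends (t : assignment) (r : passignment) : Prop :=
  forall x b, r x = Some b -> t x = b.

Definition eval_sval (t : assignment) (v : sval) : bool :=
  match v with SConst b => b | SLit l => sat_lit t l end.

Definition comp_as (t : assignment) (s : substitution) : assignment :=
  fun x => eval_sval t (s x).

Definition cost (m : nat) (b : 'I_m -> nat) (a : assignment) : nat :=
  \sum_(i < m) (a (b i) : nat).

Definition cost_SR (m : nat) (b : 'I_m -> nat) (G : cmset) (C : clause) : Prop :=
  exists s : substitution,
    (forall D, D \in restrict s (C :: G) ->
       up_derives (restrict (subst_of_pa (negc C)) G) D) /\
    (forall t : assignment, extends t (negc C) ->
       cost b (comp_as t s) <= cost b t).

Definition res_or_weak (G : cmset) (C : clause) : Prop :=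
  (exists D1 D2 (x : nat), [/\ D1 \in G, D2 \in G, (x, true) \in D1,
      (x, false) \in D2 & C = (D1 `\ (x, true)) `|` (D2 `\ (x, false))])
  \/ (exists D, D \in G /\ D `<=` C).

Definition step (m : nat) (b : 'I_m -> nat) (HS HS' : cmset * cmset) : Prop :=
  let: (Hh, Ss) := HS in let: (Hh', Ss') := HS' in
  ( perm_eq Ss' Ss /\ (exists C, res_or_weak Hh C /\ perm_eq Hh' (C :: Hh))) \/
      (perm_eq Ss' Ss /\ (exists C, cost_SR b Hh C /\ perm_eq Hh' (C :: Hh))) \/
      (perm_eq Hh' Hh /\ (exists C, C \in Hh /\ perm_eq Ss' (C :: Ss))) \/
      (perm_eq Hh' Hh /\ (exists (C : clause) (x : nat) (R : cmset),
         perm_eq Ss (C :: R) /\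
         perm_eq Ss' (((x, true) |` C) :: ((x, false) |` C) :: R))) \/
      (perm_eq Hh' Hh /\ (exists (C : clause) (x : nat) (R : cmset),
         perm_eq Ss (((x, true) |` C) :: ((x, false) |` C) :: R) /\
         perm_eq Ss' (C :: R))).

Definition H0 (m : nat) (C : 'I_m -> clause) (b : 'I_m -> nat) : cmset :=
  [seq (b i, true) |` C i | i <- enum 'I_m].
Definition S0 (m : nat) (b : 'I_m -> nat) : cmset :=
  [seq [fset (b i, false)] | i <- enum 'I_m].

(* Main.v *)
Require Import Defs.
From HB Require Import structures.
From mathcomp Require Import all_boot finmap.
Local Open Scope fset_scope.
Set Implicit Arguments. Unset Strict Implicit.

Lemma memf (s : seq lit) x : (x \in [fset l' | l' in s]) = (x \in s).
Proof. by rewrite inE. Qed.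

Lemma sat_clauseP a (C : clause) :
  reflect (exists2 l, l \in C & sat_lit a l) (sat_clause a C).
Proof. exact: hasP. Qed.

Lemma eval_neg t v : eval_sval t (sval_neg v) = ~~ eval_sval t v.
Proof. by case: v => [bb|[x p]] //=; rewrite /sat_lit /=; case: (t x); case: p. Qed.

Lemma sat_lit_comp t s l : sat_lit (comp_as t s) l = eval_sval t (sub_lit s l).
Proof.
case: l => x p; rewrite /sat_lit /sub_lit /comp_as /=.
case: p; first by case: eval_sval.
by rewrite eval_neg; case: eval_sval.
Qed.

Lemma sat_restrict_clause t s E :
  sat_clause (comp_as t s) E =
  match restrict_clause s E with None => true | Some E' => sat_clause t E' end.
Proof.
rewrite /restrict_clause; case: hasP => [[l lE]|nh].
  move=> hl; apply/sat_clauseP; exists l => //; rewrite sat_lit_comp.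
  by move: hl; case: sub_lit => // -[].
apply/sat_clauseP/sat_clauseP => -[l lE].
  rewrite sat_lit_comp => hl.
  case e: (sub_lit s l) hl => [[]|l'] //= hl.
    by exfalso; apply: nh; exists l => //; rewrite e.
  exists l' => //; rewrite memf mem_pmap; apply/mapP; exists l => //; rewrite e //=.
move=> hl; move: lE; rewrite memf mem_pmap => /mapP [l0 l0E] e; exists l0 => //.
rewrite sat_lit_comp; case: (sub_lit s l0) e => // l1 [<-] //.
Qed.

Lemma sat_restrict t s G : sat_cnf (comp_as t s) G = sat_cnf t (restrict s G).
Proof.
elim: G => //= E G IH; rewrite /sat_cnf /= -/(sat_cnf _ _) IH sat_restrict_clause.
by case: restrict_clause.
Qed.

Lemma sat_cnf_ext t t' G : t =1 t' -> sat_cnf t G = sat_cnf t' G.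
Proof.
move=> e; apply: eq_all => E; apply: eq_has => l; by rewrite /sat_lit e.
Qed.

Lemma comp_pa t r : extends t r -> comp_as t (subst_of_pa r) =1 t.
Proof.
move=> h x; rewrite /comp_as /subst_of_pa; case e: (r x) => [bb|] /=.
  by rewrite (h _ _ e).
by rewrite /sat_lit /=; case: (t x).
Qed.

Lemma up_sound F : up_refutes F -> forall t, ~~ sat_cnf t F.
Proof.
elim=> {F} [F h|F l h _ IH] t.
  by apply/allP => /(_ _ h) /sat_clauseP [l]; rewrite in_fset0.
apply/negP => hs.
have hl : sat_lit t l.
  by move/allP: hs => /(_ _ h) /sat_clauseP [l']; rewrite in_fset1 => /eqP ->.
have ext : extends t (assign_lit l).
  move=> x bb; rewrite /assign_lit; case: eqP => // -> [<-].
  by move: hl; rewrite /sat_lit => /eqP.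
by move: (IH t); rewrite -sat_restrict (sat_cnf_ext _ (comp_pa ext)) hs.
Qed.

Lemma negc_ext t (D : clause) : ~~ sat_clause t D -> extends t (negc D).
Proof.
move=> /sat_clauseP nD x bb; rewrite /negc.
case: ifP => [h [<-]|_].
  by case e: (t x) => //; exfalso; apply: nD; exists (x, true) => //; rewrite /sat_lit e.
case: ifP => // h [<-]; case e: (t x) => //; exfalso; apply: nD; exists (x, false) => //.
by rewrite /sat_lit e.
Qed.

Lemma costSR_sound m (b : 'I_m -> nat) G C a :
  cost_SR b G C -> sat_cnf a G ->
  exists a', sat_cnf a' (C :: G) /\ cost b a' <= cost b a.
Proof.
move=> [s [h1 h2]] hG.
case hC: (sat_clause a C).
  by exists a; split => //; rewrite /sat_cnf /= hC.
have ext := negc_ext (negbT hC).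
exists (comp_as a s); split; last exact: h2.
rewrite sat_restrict; apply/allP => D hD.
case hDs: (sat_clause a D) => //.
have := up_sound (h1 D hD) a.
rewrite -sat_restrict (sat_cnf_ext _ (comp_pa (negc_ext (negbT hDs)))).
by rewrite -sat_restrict (sat_cnf_ext _ (comp_pa ext)) hG.
Qed.

Lemma res_sound G C a : res_or_weak G C -> sat_cnf a G -> sat_clause a C.
Proof.
move=> [[D1 [D2 [x [h1 h2 x1 x2 ->]]]]|[D [hD sub]]] /allP hG.
  move: (hG _ h1) (hG _ h2) => /sat_clauseP [l1 l1D s1] /sat_clauseP [l2 l2D s2].
  apply/sat_clauseP; case ex: (a x).
    exists l2 => //; rewrite in_fsetU; apply/orP; right; rewrite in_fsetD1 l2D andbT.
    by apply/eqP => e; move: s2; rewrite e /sat_lit ex.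
  exists l1 => //; rewrite in_fsetU; apply/orP; left; rewrite in_fsetD1 l1D andbT.
  by apply/eqP => e; move: s1; rewrite e /sat_lit ex.
move: (hG _ hD) => /sat_clauseP [l lD sl]; apply/sat_clauseP; exists l => //.
exact: (fsubsetP sub).
Qed.

Definition fals a (S : cmset) := count (fun D => ~~ sat_clause a D) S.

Lemma sat_perm a (G G' : cmset) : perm_eq G G' -> sat_cnf a G = sat_cnf a G'.
Proof. by move=> h; rewrite /sat_cnf (perm_all _ h). Qed.

Lemma fals_perm a (G G' : cmset) : perm_eq G G' -> fals a G = fals a G'.
Proof. by move=> h; rewrite /fals (permP h). Qed.

Lemma sat_U1 a l (C : clause) : sat_clause a (l |` C) = sat_lit a l || sat_clause a C.
Proof.
apply/sat_clauseP/orP => [[l' hl' s']|[h|/sat_clauseP [l' hl' s']]].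
- move: hl'; rewrite in_fset1U => /orP [/eqP e|h]; first by left; rewrite -e.
  by right; apply/sat_clauseP; exists l'.
- by exists l => //; rewrite in_fset1U eqxx.
- by exists l' => //; rewrite in_fset1U hl' orbT.
Qed.

Lemma split_fals a x (C : clause) :
  ((~~ sat_clause a ((x, true) |` C)) + (~~ sat_clause a ((x, false) |` C)) = ~~ sat_clause a C)%N.
Proof. by rewrite !sat_U1 /sat_lit /=; case: (a x); case: sat_clause. Qed.

Lemma step_sound m (b : 'I_m -> nat) H S H' S' :
  step b (H, S) (H', S') ->
  (forall a, sat_cnf a H -> exists a', sat_cnf a' H' /\ cost b a' <= cost b a) /\
  (forall a, sat_cnf a H' -> sat_cnf a H /\ fals a S' = fals a S).
Proof.
rewrite /step.
case=> [[pS [C [hC pH]]]|[[pS [C [hC pH]]]|[[pH [C [hC pS]]]|[[pH [C [x [R [p1 p2]]]]]|[pH [C [x [R [p1 p2]]]]]]]]].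
- split=> a ha.
    exists a; split => //; rewrite (sat_perm _ pH) /sat_cnf /= -/(sat_cnf _ _) ha andbT.
    exact: res_sound hC ha.
  rewrite (sat_perm _ pH) /sat_cnf /= in ha; case/andP: ha => _ ha.
  by split => //; apply: fals_perm.
- split=> a ha.
    have [a' [h1 h2]] := costSR_sound hC ha.
    by exists a'; split => //; rewrite (sat_perm _ pH).
  rewrite (sat_perm _ pH) /sat_cnf /= in ha; case/andP: ha => _ ha.
  by split => //; apply: fals_perm.
- split=> a ha; first by exists a; split => //; rewrite (sat_perm _ pH).
  rewrite (sat_perm _ pH) in ha; split => //.
  rewrite (fals_perm _ pS) /fals /= -/(fals _ _).
  by move/allP: ha => /(_ _ hC) ->.
- split=> a ha; first by exists a; split => //; rewrite (sat_perm _ pH).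
  rewrite (sat_perm _ pH) in ha; split => //.
  rewrite (fals_perm _ p1) (fals_perm _ p2) /fals /= -/(fals _ _).
  by rewrite addnA split_fals.
- split=> a ha; first by exists a; split => //; rewrite (sat_perm _ pH).
  rewrite (sat_perm _ pH) in ha; split => //.
  rewrite (fals_perm _ p1) (fals_perm _ p2) /fals /= -/(fals _ _).
  by rewrite addnA split_fals.
Qed.

Lemma fals_S0 m (b : 'I_m -> nat) a : fals a (S0 b) = cost b a.
Proof.
rewrite /fals /S0 /cost count_map.
have -> : \sum_(i < m) a (b i) = \sum_(i <- enum 'I_m) a (b i) by rewrite big_enum.
elim: (enum 'I_m) => [|i s IH]; first by rewrite big_nil.
rewrite big_cons /= IH; congr (_ + _)%N.
have -> : sat_clause a [fset (b i, false)] = sat_lit a (b i, false).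
  by apply/sat_clauseP/idP => [[l]|h]; [rewrite in_fset1 => /eqP ->|exists (b i, false); rewrite ?in_fset1].
by rewrite /sat_lit /=; case: (a (b i)).
Qed.

Theorem theorem7p4 (m : nat) (C : 'I_m -> clause) (b : 'I_m -> nat)
  (b_inj : injective b)
  (b_fresh : forall i j (l : lit), l \in C j -> l.1 <> b i)
  (H0_sat : exists a : assignment, sat_cnf a (H0 C b))
  (d : nat -> cmset * cmset) (t k : nat)
  (d_start : d 0 = (H0 C b, S0 b))
  (d_steps : forall i, i < t -> step b (d i) (d i.+1))
  (d_end : count_mem fset0 (d t).2 = k) :
  forall a : assignment, sat_cnf a (H0 C b) ->
    k <= count (fun D => ~~ sat_clause a D) (S0 b).
Proof.
have st : forall i, i < t -> 
  (forall a, sat_cnf a (d i).1 -> exists a', sat_cnf a' (d i.+1).1 /\ cost b a' <= cost b a) /\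
  (forall a, sat_cnf a (d i.+1).1 -> sat_cnf a (d i).1 /\ fals a (d i.+1).2 = fals a (d i).2).
  move=> i hi; move: (d_steps i hi); case: (d i) => H S; case: (d i.+1) => H' S'.
  exact: step_sound.
have fw : forall j, j <= t -> forall a, sat_cnf a (H0 C b) ->
    exists a', sat_cnf a' (d j).1 /\ cost b a' <= cost b a.
  elim=> [|j IH] hj a ha; first by exists a; rewrite d_start.
  have [a' [h1 h2]] := IH (ltnW hj) a ha.
  have [a'' [h3 h4]] := (st j hj).1 a' h1.
  by exists a''; split => //; apply: leq_trans h2.
have bw : forall j, j <= t -> forall a, sat_cnf a (d j).1 -> fals a (d j).2 = fals a (S0 b).
  elim=> [|j IH] hj a ha; first by rewrite d_start.
  have [h1 h2] := (st j hj).2 a ha.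
  by rewrite h2 IH // ltnW.
move=> a ha.
have [a' [h1 h2]] := fw t (leqnn t) a ha.
rewrite -/(fals a (S0 b)) fals_S0 -d_end.
apply: leq_trans h2.
rewrite -fals_S0 -(bw t (leqnn t) a' h1) /fals.
apply: sub_count => D /= /eqP ->.
by apply/negP => /sat_clauseP [l]; rewrite in_fset0.
Qed.
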